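(* Let $G=(V,E)$ be a finite simple undirected graph, $n=|V|$, $G_0:=G$, and let $W_1,\dots,W_r$ be distinct subsets of $V$ such that for every $t\in\{1,\dots,r\}$, $W_t$ is a clique of $G_{t-1}$ with $|W_t|\ge2$ and $G_t:=G_{t-1}\mid W_t$. Let $F_0:=STAB(G)$ and $F_t:=\{x\in STAB(G)\mid x_{W_j}=1,\ j=1,\dots,t\}$. Suppose there is $k>0$ such that for all $t\in\{1,\dots,r\}$: (I) $|W_t|=k$ and the subgraph of $G_{t-1}$ induced by $\bigcup_{i=1}^tW_i$ is $k$-partite with vertex classes $V_t^1,\dots,V_t^k$; (II) $T_t:=(V_t,\mathcal W_t)$, with $V_t:=\bigcup_{i=1}^kV_t^i$ and $\mathcal W_t:=\{W_1,\dots,W_t\}$, is a strong hypertree; (III) for every $w\in V_t^0:=V\setminus V_t$ there exists $i\in\{1,\dots,k\}$ with $N_{G_{t-1}}(w)\cap V_t^i=\emptyset$. Then for all $t\in\{1,\dots,r\}$, the inequality $x_{W_t}\le1$ is facet defining for $F_{t-1}$.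
   Context: For a graph $G=(V,E)$, $\mathcal S(G)\subseteq\{0,1\}^V$ is the set of characteristic vectors of stable sets of $G$, and $STAB(G)=\mathrm{conv}\,\mathcal S(G)$. For $W\subseteq V$ and $x\in\mathbb R^V$, $x_W=\sum_{v\in W}x_v$. $N_H(u)$ is the neighborhood of $u$ in a graph $H$. The clique projection of a clique $W$ ($|W|\ge2$) of a graph $H=(V,E_H)$ is $H\mid W=(V,E_H\cup\{uv\notin E_H\mid u\ne v,\ W\subseteq N_H(u)\cup N_H(v)\})$. A hypergraph $(V_t,\mathcal W_t)$ with all hyperedges of size $k$ is a strong hypertree if either $\mathcal W_t=\{V_t\}$, or there is a vertex $v\in V_t$ incident to a hyperedge $W_i\in\mathcal W_t$ that shares exactly $k-1$ vertices with some other hyperedge, such that $(V_t\setminus\{v\},\mathcal W_t\setminus\{W_i\})$ is again a strong hypertree. An inequality is facet defining for a polytope $P$ if it is valid for $P$ and the face it defines has dimension $\dim P-1$. *)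

(* Defs.v *)
From mathcomp Require Import all_boot all_order all_algebra.
Set Implicit Arguments. Unset Strict Implicit. Unset Printing Implicit Defensive.
Import Order.TTheory GRing.Theory Num.Theory.
Local Open Scope ring_scope.

Definition simple_graph (T : finType) (e : rel T) : Prop :=
  (forall u, ~~ e u u) /\ (forall u v, e u v = e v u).

Definition nbhd (T : finType) (e : rel T) (u : T) : {set T} := [set v | e u v].

Definition stable (T : finType) (e : rel T) (A : {set T}) : bool :=
  [forall u in A, forall v in A, ~~ e u v].

Definition clique (T : finType) (e : rel T) (W : {set T}) : bool :=
  [forall u in W, forall v in W, (u != v) ==> e u v].

Definition clique_proj (T : finType) (e : rel T) (W : {set T}) : rel T :=
  fun u v => e u v || ((u != v) && (W \subset nbhd e u :|: nbhd e v)).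

(* G_0 = G, G_{t+1} = G_t | W t  (W is 0-indexed: W t is the paper's W_{t+1}) *)
Fixpoint proj_seq (T : finType) (e : rel T) (W : nat -> {set T}) (t : nat) : rel T :=
  match t with
  | 0 => e
  | t'.+1 => clique_proj (proj_seq e W t') (W t')
  end.

Definition conv_fin (R : realFieldType) (T : finType) (I : finType) (P : pred I)
    (p : I -> T -> R) (x : T -> R) : Prop :=
  exists l : I -> R,
    [/\ forall i, 0 <= l i, \sum_(i | P i) l i = 1 &
        forall v, x v = \sum_(i | P i) l i * p i v].

Definition charvec (R : realFieldType) (T : finType) (A : {set T}) : T -> R :=
  fun v => (v \in A)%:R.

Definition STAB (R : realFieldType) (T : finType) (e : rel T) : (T -> R) -> Prop :=
  conv_fin (fun A : {set T} => stable e A) (@charvec R T).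

Definition xsum (R : realFieldType) (T : finType) (x : T -> R) (W : {set T}) : R :=
  \sum_(v in W) x v.

Definition aff_indep (R : realFieldType) (T : finType) (m : nat) (p : 'I_m -> T -> R) : Prop :=
  forall c : 'I_m -> R, \sum_i c i = 0 -> (forall v, \sum_i c i * p i v = 0) ->
    forall i, c i = 0.

(* the maximal number of affinely independent points of P is m,
   i.e. the affine dimension of P is m - 1 (m = 0 : P empty, dim -1) *)
Definition max_aff (R : realFieldType) (T : finType) (P : (T -> R) -> Prop) (m : nat) : Prop :=
  (exists p : 'I_m -> T -> R, (forall i, P (p i)) /\ aff_indep p) /\
  (forall p : 'I_m.+1 -> T -> R, (forall i, P (p i)) -> ~ aff_indep p).

Definition facet_defining (R : realFieldType) (T : finType) (P : (T -> R) -> Prop)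
    (a : T -> R) (b : R) : Prop :=
  (forall x, P x -> \sum_v a v * x v <= b) /\
  exists m, max_aff P m.+1 /\ max_aff (fun x => P x /\ \sum_v a v * x v = b) m.

Definition k_hypergraph (T : finType) (k : nat) (Vt : {set T}) (Ws : {set {set T}}) : Prop :=
  forall W, W \in Ws -> W \subset Vt /\ #|W| = k.

Inductive strong_hypertree (T : finType) (k : nat) : {set T} -> {set {set T}} -> Prop :=
| sht_base Vt : k_hypergraph k Vt [set Vt] -> strong_hypertree k Vt [set Vt]
| sht_step Vt Ws v Wi :
    k_hypergraph k Vt Ws -> v \in Vt -> Wi \in Ws -> v \in Wi ->
    (exists2 W', (W' \in Ws) && (W' != Wi) & #|Wi :&: W'| = k.-1) ->
    strong_hypertree k (Vt :\ v) (Ws :\ Wi) ->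
    strong_hypertree k Vt Ws.

(* Main.v *)
Require Import Defs.
From mathcomp Require Import all_boot all_order all_algebra.
From mathcomp Require Import zify ring lra.
Import Order.TTheory GRing.Theory Num.Theory.
Local Open Scope ring_scope.
Set Implicit Arguments. Unset Strict Implicit.

Section Graph.
Variables (T : finType) (e : rel T) (W : nat -> {set T}).
Hypothesis se : simple_graph e.

Lemma proj_irr t u : ~~ proj_seq e W t u u.
Proof.
elim: t => [|t IH] /=; first by case: se.
by rewrite /clique_proj negb_or IH eqxx.
Qed.

Lemma proj_sym t u v : proj_seq e W t u v = proj_seq e W t v u.
Proof.
elim: t u v => [|t IH] u v /=; first by case: se => _ ->.
by rewrite /clique_proj IH eq_sym setUC /nbhd.
Qed.

Lemma proj_mono t t' u v : (t <= t')%N -> proj_seq e W t u v -> proj_seq e W t' u v.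
Proof.
move=> /subnK <-; elim: (t' - t)%N => [|d IH] //= h.
by rewrite /clique_proj IH.
Qed.

Lemma e_proj t u v : e u v -> proj_seq e W t u v.
Proof. exact: (@proj_mono 0). Qed.

Lemma clique_mono t t' B : (t <= t')%N -> clique (proj_seq e W t) B -> clique (proj_seq e W t') B.
Proof.
move=> le /forall_inP H; apply/forall_inP => u uB; apply/forall_inP => v vB.
apply/implyP => uv; apply: (proj_mono le).
by move/forall_inP: (H u uB) => /(_ v vB) /implyP; apply.
Qed.

Lemma stable_lower t A : stable (proj_seq e W t) A -> stable e A.
Proof.
move=> /forall_inP H; apply/forall_inP => u uA; apply/forall_inP => v vA.
apply/negP => /(@e_proj t) h.
by move/forall_inP: (H u uA) => /(_ v vA); rewrite h.
Qed.

Lemma stable_proj t A : stable e A -> (forall i, (i < t)%N -> exists w, w \in A :&: W i) ->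
  stable (proj_seq e W t) A.
Proof.
elim: t => [|t IH] //= sA hw.
have sAt := IH sA (fun i lt => hw i (ltnW lt)).
have [w] := hw t (ltnSn t); rewrite inE => /andP [wA wW].
apply/forall_inP => u uA; apply/forall_inP => v vA.
rewrite /clique_proj negb_or.
move/forall_inP: (sAt) => /(_ u uA) /forall_inP /(_ v vA) ->; rewrite /=.
apply/negP => /andP [_ /subsetP /(_ w wW)]; rewrite inE /nbhd !inE.
move/forall_inP: (sAt) => H.
by move/forall_inP: (H u uA) => /(_ w wA) /negbTE ->; move/forall_inP: (H v vA) => /(_ w wA) /negbTE ->.
Qed.

End Graph.

Lemma stable_clique (T : finType) (H : rel T) A B : stable H A -> clique H B -> (#|A :&: B| <= 1)%N.
Proof.
move=> /forall_inP sA /forall_inP cB; rewrite leqNgt; apply/negP => /card_gt1P [u [v [uI vI uv]]].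
move: uI vI; rewrite !inE => /andP [uA uB] /andP [vA vB].
move/forall_inP: (cB u uB) => /(_ v vB) /implyP /(_ uv) h.
by move/forall_inP: (sA u uA) => /(_ v vA); rewrite h.
Qed.

Section Hyper.
Variables (R : realFieldType) (T : finType) (k : nat).

Lemma sht_khyp (Vt : {set T}) Ws : strong_hypertree k Vt Ws -> k_hypergraph k Vt Ws.
Proof. by case. Qed.

Lemma sht_card (Vt : {set T}) Ws : strong_hypertree k Vt Ws -> (#|Vt| + 1 <= k + #|Ws|)%N.
Proof.
elim => {Vt Ws} [Vt kh | Vt Ws v Wi kh vV WiW vWi _ _ IH].
  by rewrite cards1 (proj2 (kh Vt (set11 Vt))).
move: IH; rewrite (cardsD1 v Vt) (cardsD1 Wi Ws) vV WiW.
move: (#|Vt :\ v|) (#|Ws :\ Wi|) => a b; lia.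
Qed.

Lemma sht_indep (Vt : {set T}) Ws : (0 < k)%N -> strong_hypertree k Vt Ws ->
  forall c : {set T} -> R, (forall v, \sum_(B in Ws) c B * (v \in B)%:R = 0) ->
  forall B, B \in Ws -> c B = 0.
Proof.
move=> k0; elim => {Vt Ws} [Vt kh | Vt Ws v Wi kh vV WiW vWi _ sh IH] c hc B.
  rewrite inE => /eqP ->.
  have : (0 < #|Vt|)%N by rewrite (proj2 (kh Vt (set11 Vt))).
  case/card_gt0P => v vV; move: (hc v); rewrite big_set1 vV mulr1 => ->; done.
have khs := sht_khyp sh.
have vnot : forall B', B' \in Ws :\ Wi -> v \notin B'.
  move=> B' /khs [/subsetP sub _]; apply/negP => /sub; by rewrite !inE eqxx.
have cWi : c Wi = 0.
  move: (hc v); rewrite (bigD1 Wi) //= vWi mulr1 big1 ?addr0 //.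
  move=> B' /andP [B'W B'n]; rewrite (negbTE (vnot B' _)) ?mulr0 //.
  by rewrite !inE B'n.
have IH' := IH c.
move=> BW; case: (eqVneq B Wi) => [-> // | BWi].
apply: IH'; last by rewrite !inE BWi.
move=> u; move: (hc u); rewrite (bigD1 Wi) //= cWi mul0r add0r.
by rewrite (eq_bigl (fun B' => B' \in Ws :\ Wi)) // => B'; rewrite !inE andbC.
Qed.
End Hyper.

Definition aff_indepI (R : realFieldType) (T I : finType) (p : I -> T -> R) : Prop :=
  forall c : I -> R, \sum_i c i = 0 -> (forall v, \sum_i c i * p i v = 0) -> forall i, c i = 0.

Lemma reindex_aff (R : realFieldType) (T I J : finType) (h : J -> I) (p : I -> T -> R) :
  injective h -> aff_indepI p -> aff_indepI (fun j => p (h j)).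
Proof.
move=> hi ai c s0 sv j.
pose c' i := \sum_(j' | h j' == i) c j'.
have eqs : forall F : I -> R, \sum_i c' i * F i = \sum_j c j * F (h j).
  move=> F; rewrite (partition_big h predT) //=; apply: eq_bigr => i _.
  rewrite /c' mulr_suml; apply: eq_bigr => j' /eqP <-; done.
have c'0 : forall i, c' i = 0.
  apply: ai; first by move: (eqs (fun _ => 1)); under eq_bigr do rewrite mulr1; move->;
    under eq_bigr do rewrite mulr1.
  move=> v; rewrite (eqs (fun i => p i v)); exact: sv.
move: (c'0 (h j)); rewrite /c' (eq_bigl (pred1 j)) ?big_pred1_eq //.
by move=> j' /=; apply/eqP/eqP => [/hi | ->].
Qed.

Lemma row_free_of (F : fieldType) m n (A : 'M[F]_(m, n)) :
  (forall c : 'rV_m, c *m A = 0 -> c = 0) -> row_free A.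
Proof.
move=> H; rewrite -kermx_eq0; apply/eqP/row_matrixP => i; rewrite row0; apply: H.
by rewrite -row_mul mulmx_ker row0.
Qed.

Lemma rank_bound (F : fieldType) N n s (M : 'M[F]_(N, n)) (B : 'M_(n, s)) :
  M *m B = 0 -> row_free M -> row_free B^T -> (N + s <= n)%N.
Proof.
move=> MB fM fB; have := mulmx0_rank_max MB.
by rewrite (eqP fM) -mxrank_tr (eqP fB).
Qed.

Lemma sum_enum (R : realFieldType) (T : finType) (F : T -> R) :
  \sum_(j < #|T|) F (enum_val j) = \sum_v F v.
Proof.
by rewrite (reindex (@enum_val T predT)) //; apply: onW_bij; exact: enum_val_bij.
Qed.

Lemma aff_upper (R : realFieldType) (T : finType) N s (p : 'I_N -> T -> R) (rows : 'I_s -> {set T}) :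
  (forall i j, \sum_(v in rows j) p i v = 1) ->
  (forall c : 'I_s -> R, (forall v, \sum_j c j * (v \in rows j)%:R = 0) -> forall j, c j = 0) ->
  aff_indep p -> (N + s <= #|T| + 1)%N.
Proof.
move=> hp hr ai.
pose M := row_mx (\matrix_(i < N, j < #|T|) p i (enum_val j)) (const_mx 1 : 'M[R]_(N, 1)).
pose B := col_mx (\matrix_(j < #|T|, jj < s) (enum_val j \in rows jj)%:R) (const_mx (-1) : 'M[R]_(1, s)).
apply: (@rank_bound R N (#|T| + 1) s M B).
- rewrite /M /B mul_row_col; apply/matrixP => i jj; rewrite !mxE big_ord1 !mxE mul1r.
  under eq_bigr do rewrite !mxE.
  rewrite (sum_enum (fun v => p i v * (v \in rows jj)%:R)).
  rewrite [X in X + _](_ : _ = \sum_(v in rows jj) p i v); first by rewrite hp subrr.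
  rewrite [RHS]big_mkcond /=; apply: eq_bigr => v _; case: (v \in rows jj); rewrite ?mulr1 ?mulr0 //.
- apply: row_free_of => c; rewrite /M mul_mx_row => /eqP; rewrite row_mx_eq0 => /andP [/eqP h1 /eqP h2].
  apply/matrixP => a i; rewrite (ord1 a) mxE; apply: ai.
  + move/matrixP: h2 => /(_ 0 0); rewrite !mxE => h2; apply: etrans h2.
  by apply: eq_bigr => j _; rewrite mxE mulr1.
  + move=> v; move/matrixP: h1 => /(_ 0 (enum_rank v)); rewrite !mxE => h1; apply: etrans h1.
    by apply: eq_bigr => j _; rewrite mxE enum_rankK.
- apply: row_free_of => c; rewrite /B tr_col_mx mul_mx_row => /eqP; rewrite row_mx_eq0 => /andP [/eqP h1 _].
  apply/matrixP => a jj; rewrite (ord1 a) mxE; apply: hr => v.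
  move/matrixP: h1 => /(_ 0 (enum_rank v)); rewrite !mxE => h1; apply: etrans h1.
  by apply: eq_bigr => j _; rewrite !mxE enum_rankK.
Qed.

Lemma to_ord (R : realFieldType) (T I : finType) N (g : I -> {set T}) (P : {set T} -> Prop) :
  (N <= #|I|)%N -> (forall x, P (g x)) -> aff_indepI (fun x => charvec R (g x)) ->
  exists p : 'I_N -> {set T}, (forall i, P (p i)) /\ aff_indep (fun i => charvec R (p i)).
Proof.
move=> le hP ai; exists (fun i => g (enum_val (widen_ord le i))); split => // .
have inj : injective (fun i : 'I_N => enum_val (widen_ord le i) : I).
  by move=> a b /enum_val_inj [] h; apply: val_inj.
exact: (reindex_aff inj ai).
Qed.

Lemma charvec_sum (R : realFieldType) (T : finType) (A B : {set T}) :
  \sum_(v in B) charvec R A v = #|A :&: B|%:R.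
Proof.
rewrite /charvec -natr_sum; congr (_%:R).
rewrite -sum1_card big_mkcond /= [RHS]big_mkcond /=.
by apply: eq_bigr => v _; rewrite inE; case: (v \in A); case: (v \in B).
Qed.

Lemma charvec_dot (R : realFieldType) (T : finType) (A B : {set T}) :
  \sum_v charvec R B v * charvec R A v = #|A :&: B|%:R.
Proof.
rewrite -charvec_sum [RHS]big_mkcond /=; apply: eq_bigr => v _.
by rewrite {1}/charvec; case: (v \in B); rewrite ?mul1r ?mul0r.
Qed.

Lemma stab_charvec (R : realFieldType) (T : finType) (e : rel T) A :
  stable e A -> STAB e (charvec R A).
Proof.
move=> sA; exists (fun B => (B == A)%:R); split.
- by move=> B; rewrite ler0n.
- rewrite (bigD1 A) //= eqxx big1 ?addr0 // => B /andP [_ /negbTE ->]; done.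
- move=> v; rewrite (bigD1 A) //= eqxx mul1r big1 ?addr0 // => B /andP [_ /negbTE ->].
  by rewrite mul0r.
Qed.

Lemma card_cover (T : finType) k (A : 'I_k -> {set T}) (B : {set T}) :
  B \subset \bigcup_i A i -> (#|B| <= \sum_i #|A i :&: B|)%N.
Proof.
move=> sub.
have eB : B = \bigcup_i (A i :&: B).
  apply/setP => x; apply/idP/bigcupP.
  - move=> xB; have /bigcupP [i _ xi] := subsetP sub x xB; exists i => //; by rewrite inE xi xB.
  - by case=> i _; rewrite inE => /andP [].
rewrite {1}eB; apply: (big_ind2 (fun (S : {set T}) n => #|S| <= n)%N) => //.
- by rewrite cards0.
- move=> S1 n1 S2 n2 h1 h2; apply: leq_trans (leq_card_setU S1 S2).1 _.
  exact: leq_add.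
Qed.

Section Main.
Variables (R : realFieldType) (T : finType) (e : rel T) (r : nat) (W : nat -> {set T}).
Hypothesis se : simple_graph e.
Hypothesis Wdist : forall i j, (i < r)%N -> (j < r)%N -> W i = W j -> i = j.
Hypothesis Wcl : forall t, (t < r)%N -> clique (proj_seq e W t) (W t) /\ (2 <= #|W t|)%N.
Hypothesis Hk : exists k : nat, (0 < k)%N /\
     forall t, (t < r)%N ->
       #|W t| = k /\
         exists Vc : 'I_k -> {set T},
           [/\ \bigcup_(i < k) Vc i = \bigcup_(j < t.+1) W j,
               (forall i i', i != i' -> [disjoint Vc i & Vc i']),
               (forall i, stable (proj_seq e W t) (Vc i)),
               strong_hypertree k (\bigcup_(i < k) Vc i) [set W j | j : 'I_t.+1]
             & forall w, w \notin \bigcup_(i < k) Vc i ->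
                 exists i, nbhd (proj_seq e W t) w :&: Vc i = set0].

Lemma rows_indep t s : (t < r)%N -> (s <= t.+1)%N ->
  forall c : 'I_s -> R, (forall v, \sum_j c j * (v \in W j)%:R = 0) -> forall j, c j = 0.
Proof.
move=> tr st c hc j.
have [k [k0 /(_ t tr) [_ [Vc [_ _ _ sh _]]]]] := Hk.
pose c' (B : {set T}) := \sum_(j' : 'I_s | W j' == B) c j'.
have hin : forall j' : 'I_s, W j' \in [set W j | j : 'I_t.+1].
  move=> j'; apply/imsetP; exists (widen_ord st j') => //.
have c'0 := @sht_indep R T k _ _ k0 sh c'.
have : c' (W j) = 0.
  apply: c'0 (hin j) => v; rewrite -[RHS](hc v).
  rewrite (partition_big (fun j' : 'I_s => W j') (fun B => B \in [set W j | j : 'I_t.+1])) //=.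
  apply: eq_bigr => B _; rewrite /c' mulr_suml; apply: eq_bigr => j' /eqP -> //.
rewrite /c' (eq_bigl (pred1 j)) ?big_pred1_eq // => j' /=.
apply/eqP/eqP => [h | -> //]; apply/val_inj/Wdist => //; apply: (leq_trans (ltn_ord _)); lia.
Qed.

Definition good s (A : {set T}) := stable e A /\ forall j, (j < s)%N -> #|A :&: W j| = 1%N.

Lemma lower0 : exists p : 'I_(#|T| - 0).+1 -> {set T},
  (forall i, good 0 (p i)) /\ aff_indep (fun i => charvec R (p i)).
Proof.
pose g (x : ('I_1 + T)%type) := match x with inl _ => set0 | inr v => [set v] end.
apply: (@to_ord R T _ _ g).
- by rewrite card_sum card_ord subn0 add1n.
- case=> [i|v]; split => //.
  + by apply/forall_inP => u; rewrite inE.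
  + apply/forall_inP => u; rewrite inE => /eqP ->; apply/forall_inP => u'; rewrite inE => /eqP ->.
    by case: se.
- move=> c s0 sv.
  have cv : forall v, c (inr v) = 0.
    move=> v; move: (sv v); rewrite big_sumType /= big_ord1 /charvec inE mulr0 add0r.
    rewrite (bigD1 v) //= inE eqxx mulr1 big1 ?addr0 // => v' /negbTE nv.
    by rewrite inE eq_sym nv mulr0.
  have c0 : c (inl ord0) = 0.
    move: s0; rewrite big_sumType /= big_ord1 big1 ?addr0 // => v _; exact: cv.
  by case=> [i|v]; [rewrite (ord1 i) | exact: cv].
Qed.

Lemma lowerS t : (t < r)%N -> exists p : 'I_(#|T| - t.+1).+1 -> {set T},
  (forall i, good t.+1 (p i)) /\ aff_indep (fun i => charvec R (p i)).
Proof.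
move=> tr.
have [k [k0 Hkt]] := Hk.
have [_ [Vc [hU hdisj hst sh hout]]] := Hkt t tr.
set U := \bigcup_(i < k) Vc i in hU hdisj sh hout.
have WU : forall j, (j < t.+1)%N -> W j \subset U.
  move=> j jt; rewrite hU; exact: (@bigcup_sup _ _ (Ordinal jt) _ (fun i : 'I_t.+1 => W i)).
have VcU : forall i, Vc i \subset U by move=> i; rewrite /U; apply: bigcup_sup.
have le1 : forall i j, (j < t.+1)%N -> (#|Vc i :&: W j| <= 1)%N.
  move=> i j jt; apply: stable_clique (hst i) _.
  have jr : (j < r)%N by lia.
  apply: (@clique_mono _ _ _ j t) (Wcl jr).1; lia.
have eq1 : forall i j, (j < t.+1)%N -> #|Vc i :&: W j| = 1%N.
  move=> i j jt.
  have jr : (j < r)%N by lia.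
  have cov := card_cover (WU j jt).
  rewrite (Hkt j jr).1 in cov.
  apply/eqP; rewrite eqn_leq le1 //= lt0n; apply/negP => /eqP a0.
  move: cov; rewrite (bigD1 i) //= a0 add0n.
  have : (\sum_(i' | i' != i) #|Vc i' :&: W j| <= \sum_(i' | i' != i) 1)%N.
    by apply: leq_sum => i' _; exact: le1.
  rewrite sum1_card cardC1 card_ord => h1 h2; have := leq_trans h2 h1; lia.
have hsg : forall w : {x : T | x \notin U}, exists i, (nbhd (proj_seq e W t) (val w) :&: Vc i == set0).
  by move=> [w wU]; have [i hi] := hout w wU; exists i; apply/eqP.
pose sg w := sval (sigW (hsg w)).
have sgP : forall w, nbhd (proj_seq e W t) (val w) :&: Vc (sg w) = set0.
  by move=> w; apply/eqP; exact: (svalP (sigW (hsg w))).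
have notin : forall (w : {x : T | x \notin U}) i, (val w \in Vc i) = false.
  move=> w i; apply/negP => /(subsetP (VcU i)); by rewrite (negbTE (valP w)).
pose g (x : ('I_k + {x : T | x \notin U})%type) :=
  match x with inl i => Vc i | inr w => Vc (sg w) :|: [set val w] end.
apply: (@to_ord R T _ _ g).
- rewrite card_sum card_ord card_sig.
  have -> : #|[pred x | x \notin U]| = #|~: U| by apply: eq_card => x; rewrite !inE.
  have := cardsC U; have := sht_card sh.
  have : (#|[set W j | j : 'I_t.+1]| <= t.+1)%N.
    by have := leq_imset_card (fun j : 'I_t.+1 => W j) predT; rewrite card_ord.
  move: #|[set W j | j : 'I_t.+1]| #|U| #|~: U| => a b c; lia.
- case=> [i | w]; split.
  + exact: stable_lower (hst i).
  + by move=> j jt; apply: eq1.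
  + apply: (@stable_lower T e W t); rewrite /g.
    apply/forall_inP => u uS; apply/forall_inP => v vS.
    move: uS vS; rewrite !inE => /orP [uV | /eqP ->] /orP [vV | /eqP ->].
    * by move/forall_inP: (hst (sg w)) => /(_ u uV) /forall_inP /(_ v vV).
    * apply/negP => h; have : u \in nbhd (proj_seq e W t) (val w) :&: Vc (sg w).
        by rewrite inE uV andbT /nbhd inE proj_sym.
      by rewrite sgP inE.
    * apply/negP => h; have : v \in nbhd (proj_seq e W t) (val w) :&: Vc (sg w).
        by rewrite inE vV andbT /nbhd inE.
      by rewrite sgP inE.
    * exact: proj_irr.
  + move=> j jt; rewrite setIUl.
    have -> : [set val w] :&: W j = set0.
      apply/setP => x; rewrite !inE; apply/negP => /andP [/eqP -> /(subsetP (WU j jt))].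
      by rewrite (negbTE (valP w)).
    by rewrite setU0 eq1.
- move=> c s0 sv.
  have cw : forall w, c (inr w) = 0.
    move=> w; move: (sv (val w)); rewrite big_sumType /=.
    rewrite big1 ?add0r; last by move=> i _; rewrite /charvec notin mulr0.
    rewrite (bigD1 w) //= big1 ?addr0.
    + by rewrite /charvec !inE eqxx orbT mulr1.
    + move=> w' nw; rewrite /charvec !inE notin /= val_eqE.
      by rewrite eq_sym (negbTE nw) mulr0.
  have ci : forall i, c (inl i) = 0.
    move=> i; have : (0 < #|Vc i :&: W 0|)%N by rewrite eq1.
    case/card_gt0P => v; rewrite inE => /andP [vV _].
    move: (sv v); rewrite big_sumType /= [X in _ + X]big1 ?addr0; last by move=> w _; rewrite cw mul0r.
    rewrite (bigD1 i) //= big1 ?addr0.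
    + by rewrite /charvec vV mulr1.
    + move=> i' ni; rewrite /charvec (disjointFl (hdisj i' i ni) vV) mulr0 //.
  by case=> [i|w]; [exact: ci | exact: cw].
Qed.
End Main.

Lemma dot_charvec (R : realFieldType) (T : finType) (B : {set T}) (x : T -> R) :
  \sum_v charvec R B v * x v = \sum_(v in B) x v.
Proof.
by rewrite [RHS]big_mkcond; apply: eq_bigr => v _; rewrite /charvec; case: (v \in B); rewrite ?mul1r ?mul0r.
Qed.

Lemma conv_sum (R : realFieldType) (T : finType) (e : rel T) (l : {set T} -> R) (x : T -> R) (B : {set T}) :
  (forall v, x v = \sum_(A | stable e A) l A * charvec R A v) ->
  \sum_(v in B) x v = \sum_(A | stable e A) l A * #|A :&: B|%:R.
Proof.
move=> lx; rewrite (eq_bigr _ (fun v _ => lx v)) exchange_big /=.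
by apply: eq_bigr => A _; rewrite -mulr_sumr charvec_sum.
Qed.

Lemma lower_all (R : realFieldType) (T : finType) (e : rel T) (r : nat) (W : nat -> {set T}) :
  simple_graph e ->
  (forall i j, (i < r)%N -> (j < r)%N -> W i = W j -> i = j) ->
  (forall t, (t < r)%N -> clique (proj_seq e W t) (W t) /\ (2 <= #|W t|)%N) ->
  (exists k : nat, (0 < k)%N /\
     forall t, (t < r)%N ->
       #|W t| = k /\
         exists Vc : 'I_k -> {set T},
           [/\ \bigcup_(i < k) Vc i = \bigcup_(j < t.+1) W j,
               (forall i i', i != i' -> [disjoint Vc i & Vc i']),
               (forall i, stable (proj_seq e W t) (Vc i)),
               strong_hypertree k (\bigcup_(i < k) Vc i) [set W j | j : 'I_t.+1]
             & forall w, w \notin \bigcup_(i < k) Vc i ->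
                 exists i, nbhd (proj_seq e W t) w :&: Vc i = set0]) ->
  forall s, (s <= r)%N -> exists p : 'I_(#|T| - s).+1 -> {set T},
  (forall i, good e W s (p i)) /\ aff_indep (fun i => charvec R (p i)).
Proof.
move=> se Wd Wc Hk [|t] sr; first exact: (lower0 R W se).
exact: (lowerS R se Wc Hk sr).
Qed.

Unset Implicit Arguments.

Theorem theorem2 (R : realFieldType) (T : finType) (e : rel T)
    (r : nat) (W : nat -> {set T}) :
  simple_graph e ->
  (forall i j, (i < r)%N -> (j < r)%N -> W i = W j -> i = j) ->
  (forall t, (t < r)%N -> clique (proj_seq e W t) (W t) /\ (2 <= #|W t|)%N) ->
  (exists k : nat, (0 < k)%N /\
     forall t, (t < r)%N ->
       #|W t| = k /\
         exists Vc : 'I_k -> {set T},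
           [/\ (* (I) k-partite with classes Vc i of the subgraph of G_t
                  induced by W_0 u ... u W_t *)
               \bigcup_(i < k) Vc i = \bigcup_(j < t.+1) W j,
               (forall i i', i != i' -> [disjoint Vc i & Vc i']),
               (forall i, stable (proj_seq e W t) (Vc i)),
               (* (II) *)
               strong_hypertree k (\bigcup_(i < k) Vc i) [set W j | j : 'I_t.+1]
             & (* (III) *)
               forall w, w \notin \bigcup_(i < k) Vc i ->
                 exists i, nbhd (proj_seq e W t) w :&: Vc i = set0]) ->
  forall t, (t < r)%N ->
    facet_defining
      (fun x : T -> R => STAB e x /\ forall j, (j < t)%N -> xsum x (W j) = 1)
      (charvec R (W t)) 1.
Proof.
move=> se Wd Wc Hk t tr.
have L := lower_all R se Wd Wc Hk.
have ptP : forall s (A : {set T}), good e W s A ->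
    STAB e (charvec R A) /\ forall j, (j < s)%N -> xsum (charvec R A) (W j) = 1.
  move=> s A [sA hA]; split; first exact: stab_charvec.
  by move=> j js; rewrite /xsum charvec_sum hA.
split.
-
  move=> x [[l [l0 l1 lx]] hx].
  rewrite dot_charvec (conv_sum _ lx).
  have claim : forall j, (j <= t)%N -> forall A, stable e A -> 0 < l A ->
      forall i, (i < j)%N -> #|A :&: W i| = 1%N.
    elim=> [|j IH] jt A sA lA i //.
    have jr : (j < r)%N by lia.
    have IH' := IH (ltnW jt).
    have le1 : forall A, stable e A -> 0 < l A -> (#|A :&: W j| <= 1)%N.
      move=> A' sA' lA'; apply: stable_clique (Wc j jr).1.
      apply: (stable_proj sA') => i' i'j.
      have : (0 < #|A' :&: W i'|)%N by rewrite (IH' A' sA' lA' i' i'j).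
      by case/card_gt0P => w wi; exists w.
    rewrite ltnS leq_eqVlt => /orP [/eqP -> | ij]; last exact: IH'.
    have hs : \sum_(A | stable e A) l A * (1 - #|A :&: W j|%:R) = 0.
      under eq_bigr do rewrite mulrBr mulr1.
      rewrite sumrB l1 -(conv_sum _ lx).
      have := hx j; rewrite /xsum => ->; [by rewrite subrr | lia].
    have a1 := le1 A sA lA.
    have nn : forall A', stable e A' -> 0 <= l A' * (1 - #|A' :&: W j|%:R).
      move=> A' sA'.
      have := l0 A'; rewrite le0r => /orP [/eqP -> | lp]; first by rewrite mul0r.
      apply: mulr_ge0; first exact: ltW.
      by rewrite subr_ge0 lern1; apply: le1.
    have := psumr_eq0P nn hs sA.
    move/eqP; rewrite mulf_eq0 (gt_eqF lA) /= subr_eq0 => /eqP h.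
    by apply/eqP; rewrite -(eqr_nat R) -h.
  apply: le_trans (_ : \sum_(A | stable e A) l A <= 1); last by rewrite l1.
  apply: ler_sum => A sA.
  have := l0 A; rewrite le0r => /orP [/eqP -> | lp]; first by rewrite mul0r.
  rewrite -[X in _ <= X]mulr1; apply: ler_wpM2l; first exact: ltW.
  rewrite lern1; apply: stable_clique (Wc t tr).1.
  apply: (stable_proj sA) => i it.
  have : (0 < #|A :&: W i|)%N by rewrite (claim t (leqnn t) A sA lp i it).
  by case/card_gt0P => w wi; exists w.
- exists (#|T| - t)%N; split; split.
  + have [p [gp ai]] := L t (ltnW tr).
    exists (fun i => charvec R (p i)); split => //.
    by move=> i; apply: ptP; apply: gp.
  + move=> p hp ai.
    have h1 : forall i (j : 'I_t), \sum_(v in W j) p i v = 1.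
      by move=> i j; rewrite -((hp i).2 j (ltn_ord j)).
    have h2 := @rows_indep R T e r W Wd Hk t t tr (leqnSn t).
    have := @aff_upper R T _ t p (fun j : 'I_t => W j) h1 h2 ai; lia.
  + have [p [gp ai]] := L t.+1 tr.
    have [q [gq aq]] := @to_ord R T _ (#|T| - t)%N p (good e W t.+1) (ltac:(rewrite card_ord; lia)) gp ai.
    exists (fun i => charvec R (q i)); split => //.
    move=> i; have [h1 h2] := ptP _ _ (gq i); split.
    * split => // j jt; apply: h2; lia.
    * rewrite charvec_dot; case: (gq i) => _ ->; done.
  + move=> p hp ai.
    have h1 : forall i (j : 'I_t.+1), \sum_(v in W j) p i v = 1.
      move=> i j; case: (hp i) => [[_ hx] hf].
      have := ltn_ord j; rewrite ltnS leq_eqVlt => /orP [/eqP jt | jt].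
      - by rewrite -hf dot_charvec jt.
      - by rewrite -(hx j jt).
    have h2 := @rows_indep R T e r W Wd Hk t t.+1 tr (leqnn _).
    have := @aff_upper R T _ t.+1 p (fun j : 'I_t.+1 => W j) h1 h2 ai; lia.
Qed.
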